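(* Let $f:U\to\mathbb{R}^3$ be a Guichard net with Lamé coefficients $H_1,H_2,H_3$, let $h_1,h_2,h_3:U\to\mathbb{R}$ be functions satisfying $$\partial_xh_3=-\tfrac{H_2}{H_3}\kappa_{13},\quad \partial_yh_3=\tfrac{H_1}{H_3}\kappa_{23},\quad \partial_zh_3=-\tfrac{H_1H_2}{H_3^2}(\kappa_{31}-\kappa_{32}),\quad h_1=h_3+\tfrac{H_2}{H_1H_3},\quad h_2=h_3-\tfrac{H_1}{H_2H_3},$$ let $c\in\mathbb{R}$, and let $f^\star_c$ be the corresponding dual system, defined by $df^\star_c=\sum_{i=1}^3h^\star_i\,\partial_if\,dx_i$ with $h^\star_i=-(h_i+c)^2+\frac{\varepsilon_i}{H_i^2}$, $(\varepsilon_1,\varepsilon_2,\varepsilon_3)=(1,1,-1)$. Then $f^\star_c$ is again a Guichard net, i.e. its Lamé coefficients $H^\star_i=h^\star_iH_i$ satisfy $(H^\star_1)^2+(H^\star_2)^2-(H^\star_3)^2=0$.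
   Context: $U\subset\mathbb{R}^3$ open connected, coordinates $(x_1,x_2,x_3)=(x,y,z)$, $\partial_i=\partial_{x_i}$. A triply orthogonal system is $f:U\to\mathbb{R}^3$ with $\det(\partial_1f,\partial_2f,\partial_3f)\ne0$ and $(\partial_if,\partial_jf)=0$ for $i\ne j$. For $(i,j,k)$ a cyclic permutation of $(1,2,3)$, $N_i=\partial_jf\times\partial_kf/|\partial_jf\times\partial_kf|$, Lamé coefficients $H_i$ by $\partial_if=H_iN_i$, rotational coefficients $\beta_{ij}=\frac1{H_i}\partial_iH_j$, and $\kappa_{ij}=-\beta_{ij}/H_j$ is the principal curvature of the coordinate surface $x_i=\mathrm{const}$ along the $x_j$-lines. A Guichard net is a triply orthogonal system with $H_1^2+H_2^2-H_3^2=0$. A map $g$ with $dg=\sum_ik_i\partial_if\,dx_i$ (a Combescure transform of $f$) has Lamé coefficients $k_iH_i$ with respect to the same $N_i$. *)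

(* Defs.v *)
From HB Require Import structures.
From mathcomp Require Import all_boot all_order all_algebra.
From mathcomp Require Import all_classical all_reals all_analysis.
Set Implicit Arguments. Unset Strict Implicit. Unset Printing Implicit Defensive.
Import Order.TTheory GRing.Theory Num.Theory.
Import numFieldNormedType.Exports.
Local Open Scope classical_set_scope.
Local Open Scope ring_scope.

Section Defs.
Variable R : realType.
Notation V := 'rV[R]_3.

Definition I1 : 'I_3 := @Ordinal 3 0 isT.
Definition I2 : 'I_3 := @Ordinal 3 1 isT.
Definition I3 : 'I_3 := @Ordinal 3 2 isT.

(* standard basis vector e_i, i in {0,1,2} standing for x_1,x_2,x_3 *)
Definition evec (i : 'I_3) : V := delta_mx 0 i.

Definition partial {W : normedModType R} (g : V -> W) (i : 'I_3) (p : V) : W :=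
  'D_(evec i) g p.

Definition dot (u v : V) : R := (u *m v^T) 0 0.
Definition vnorm (u : V) : R := Num.sqrt (dot u u).

Definition cross (u v : V) : V :=
  \row_k (if k == 0 :> nat then u 0 1 * v 0 2 - u 0 2 * v 0 1
          else if k == 1 :> nat then u 0 2 * v 0 0 - u 0 0 * v 0 2
          else u 0 0 * v 0 1 - u 0 1 * v 0 0).

Definition succ3 (i : 'I_3) : 'I_3 := inord (i.+1 %% 3).

Definition normal (f : V -> V) (i : 'I_3) (p : V) : V :=
  let j := succ3 i in let k := succ3 j in
  let w := cross (partial f j p) (partial f k p) in
  (vnorm w)^-1 *: w.

(* Lame coefficient H_i, defined by d_i f = H_i N_i (N_i unit) *)
Definition lame (f : V -> V) (i : 'I_3) (p : V) : R :=
  dot (partial f i p) (normal f i p).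

(* Lame coefficient of a Combescure transform g of f w.r.t. the N_i of f *)
Definition lame_wrt (f g : V -> V) (i : 'I_3) (p : V) : R :=
  dot (partial g i p) (normal f i p).

Definition beta (f : V -> V) (i j : 'I_3) (p : V) : R :=
  (lame f i p)^-1 * partial (lame f j) i p.

Definition kappa (f : V -> V) (i j : 'I_3) (p : V) : R :=
  - beta f i j p / lame f j p.

Definition triply_orthogonal (U : set V) (f : V -> V) : Prop :=
  forall p, U p ->
    \det (\matrix_(i < 3, j < 3) partial f i p 0 j) != 0 /\
    (forall i j : 'I_3, i != j -> dot (partial f i p) (partial f j p) = 0).

Definition guichard_net (U : set V) (f : V -> V) : Prop :=
  triply_orthogonal U f /\
  forall p, U p -> (lame f I1 p) ^+ 2 + (lame f I2 p) ^+ 2 - (lame f I3 p) ^+ 2 = 0.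

Definition eps (i : 'I_3) : R := if i == 2 :> nat then -1 else 1.

Definition hstar (f : V -> V) (h : 'I_3 -> V -> R) (c : R) (i : 'I_3) (p : V) : R :=
  - (h i p + c) ^+ 2 + eps i / (lame f i p) ^+ 2.

End Defs.

(* Main.v *)
Require Import Defs.
From HB Require Import structures.
From mathcomp Require Import all_boot all_order all_algebra.
From mathcomp Require Import all_classical all_reals all_analysis.
Import Order.TTheory GRing.Theory Num.Theory.
Import numFieldNormedType.Exports.
Local Open Scope ring_scope.
From mathcomp Require Import ring lra.

Section S.
Variable R : realType.


Lemma det3 (K : comNzRingType) (F : nat -> nat -> K) : \det (\matrix_(i < 3, j < 3) F i j) =
  F 0%N 0%N * (F 1%N 1%N * F 2%N 2%N - F 1%N 2%N * F 2%N 1%N) - F 0%N 1%N * (F 1%N 0%N * F 2%N 2%N - F 1%N 2%N * F 2%N 0%N)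
  + F 0%N 2%N * (F 1%N 0%N * F 2%N 1%N - F 1%N 1%N * F 2%N 0%N).
Proof.
rewrite (expand_det_row _ 0) !big_ord_recl big_ord0 /cofactor /=.
rewrite !(expand_det_row _ 0) !big_ord_recl !big_ord0 /cofactor /= !det_mx11.
rewrite !mxE /=.
rewrite /bump /=. ring. Qed.


Definition co (u : 'rV[R]_3) (n : nat) : R := u 0 (inord n).

Lemma coE (u : 'rV[R]_3) (j : 'I_3) : u 0 j = co u j.
Proof. by rewrite /co inord_val. Qed.

Lemma dotE (u v : 'rV[R]_3) : dot u v = co u 0 * co v 0 + co u 1 * co v 1 + co u 2 * co v 2.
Proof.
rewrite /dot mxE !big_ord_recl big_ord0 !mxE !coE /=.
ring.
Qed.

Lemma crossE (u v : 'rV[R]_3) :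
  [/\ co (cross u v) 0 = co u 1 * co v 2 - co u 2 * co v 1,
      co (cross u v) 1 = co u 2 * co v 0 - co u 0 * co v 2 &
      co (cross u v) 2 = co u 0 * co v 1 - co u 1 * co v 0].
Proof. by rewrite /co /cross !mxE !inordK //=; split; congr (_ * _ - _ * _); congr (_ _ _); apply/val_inj; rewrite /= inordK. Qed.

Lemma coZ (a : R) (u : 'rV[R]_3) n : co (a *: u) n = a * co u n.
Proof. by rewrite /co mxE. Qed.

Lemma dot_normal_nz (u w : 'rV[R]_3) : dot u w != 0 -> dot u ((vnorm w)^-1 *: w) != 0.
Proof.
move=> H.
have -> : dot u ((vnorm w)^-1 *: w) = (vnorm w)^-1 * dot u w.
  by rewrite !dotE !coZ; ring.
rewrite mulf_neq0 // invr_eq0 /vnorm sqrtr_eq0 -ltNge.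
rewrite dotE ltNge; apply/negP => Hle.
have z k : (k < 3)%N -> co w k = 0.
  move=> Hk; apply/eqP; rewrite -sqrf_eq0 eq_le sqr_ge0 andbT.
  move: Hk; case: k => [|[|[|]]] // _; nra.
move: H; rewrite !dotE !z // !mulr0 !addr0 eqxx //.
Qed.

Lemma succ3_inord n : (n < 3)%N -> succ3 (inord n : 'I_3) = inord (n.+1 %% 3).
Proof. by move=> Hn; rewrite /succ3 inordK. Qed.

Lemma s0 : succ3 (inord 0 : 'I_3) = inord 1. Proof. by rewrite /succ3 inordK. Qed.
Lemma s1 : succ3 (inord 1 : 'I_3) = inord 2. Proof. by rewrite /succ3 inordK. Qed.
Lemma s2 : succ3 (inord 2 : 'I_3) = inord 0. Proof. by rewrite /succ3 inordK. Qed.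
Lemma cross0 u v : co (cross u v) 0 = co u 1 * co v 2 - co u 2 * co v 1. Proof. by case: (crossE u v). Qed.
Lemma cross1 u v : co (cross u v) 1 = co u 2 * co v 0 - co u 0 * co v 2. Proof. by case: (crossE u v). Qed.
Lemma cross2 u v : co (cross u v) 2 = co u 0 * co v 1 - co u 1 * co v 0. Proof. by case: (crossE u v). Qed.

Lemma det_partial (f : 'rV[R]_3 -> 'rV[R]_3) p :
  \det (\matrix_(i < 3, j < 3) partial f i p 0 j) =
  \det (\matrix_(i < 3, j < 3) (fun n m : nat => co (partial f (inord n) p) m) i j).
Proof. by congr (\det _); apply/matrixP => i j; rewrite !mxE /co !inord_val. Qed.

Ltac genco := repeat match goal with |- context [co ?u ?n] => let x := fresh "x" in generalize (co u n) => x end.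

Lemma lame_nz (f : 'rV[R]_3 -> 'rV[R]_3) p (i : 'I_3) :
  \det (\matrix_(i < 3, j < 3) partial f i p 0 j) != 0 -> lame f i p != 0.
Proof.
rewrite det_partial (@det3 _ (fun n m : nat => co (partial f (inord n) p) m)) /lame /normal => H; apply: dot_normal_nz.
move: H; rewrite -(inord_val i); case: i => [[|[|[|]]] Hi] //=;
  rewrite ?s0 ?s1 ?s2 ?s0 ?s1 ?s2 dotE cross0 cross1 cross2 => H; apply: contra H => /eqP H; apply/eqP; apply: (etrans _ H);
  genco; ring.
Qed.

Lemma dotZl (a : R) (u v : 'rV[R]_3) : dot (a *: u) v = a * dot u v.
Proof. by rewrite !dotE !coZ; ring. Qed.

Lemma alg (H1 H2 H3 h3 c : R) : H1 != 0 -> H2 != 0 -> H3 != 0 ->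
  H1 ^+ 2 + H2 ^+ 2 - H3 ^+ 2 = 0 ->
  ((- (h3 + H2 / (H1 * H3) + c) ^+ 2 + 1 / H1 ^+ 2) * H1) ^+ 2
  + ((- (h3 - H1 / (H2 * H3) + c) ^+ 2 + 1 / H2 ^+ 2) * H2) ^+ 2
  - ((- (h3 + c) ^+ 2 + (-1) / H3 ^+ 2) * H3) ^+ 2 = 0.
Proof.
move=> n1 n2 n3 e0.
have e : H3 ^+ 2 = H1 ^+ 2 + H2 ^+ 2 by apply/eqP; rewrite eq_sym -subr_eq0; apply/eqP.
set b := h3 + c.
have q1 : 1 / H1 ^+ 2 = (H1 ^+ 2 + H2 ^+ 2) / (H1 ^+ 2 * H3 ^+ 2) by rewrite -e; field; rewrite ?n1 ?n2 ?n3.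
have q2 : 1 / H2 ^+ 2 = (H1 ^+ 2 + H2 ^+ 2) / (H2 ^+ 2 * H3 ^+ 2) by rewrite -e; field; rewrite ?n1 ?n2 ?n3.
have -> : (- (h3 + H2 / (H1 * H3) + c) ^+ 2 + 1 / H1 ^+ 2) * H1 = - b ^+ 2 * H1 - 2 * b * H2 / H3 + H1 / H3 ^+ 2.
  by rewrite q1 /b; field; rewrite ?n1 ?n2 ?n3.
have -> : (- (h3 - H1 / (H2 * H3) + c) ^+ 2 + 1 / H2 ^+ 2) * H2 = - b ^+ 2 * H2 + 2 * b * H1 / H3 + H2 / H3 ^+ 2.
  by rewrite q2 /b; field; rewrite ?n1 ?n2 ?n3.
have -> : (- b ^+ 2 * H1 - 2 * b * H2 / H3 + H1 / H3 ^+ 2) ^+ 2 + (- b ^+ 2 * H2 + 2 * b * H1 / H3 + H2 / H3 ^+ 2) ^+ 2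
   = ((1 / H3 ^+ 2 - b ^+ 2) ^+ 2 + 4 * b ^+ 2 / H3 ^+ 2) * (H1 ^+ 2 + H2 ^+ 2) by field; rewrite ?n1 ?n2 ?n3.
by rewrite -e /b; field; rewrite ?n1 ?n2 ?n3.
Qed.
End S.

Theorem proposition4p4 (R : realType) (U : set 'rV[R]_3)
    (f fs : 'rV[R]_3 -> 'rV[R]_3) (h : 'I_3 -> 'rV[R]_3 -> R) (c : R) :
  open U -> connected U ->
  (forall p, U p -> differentiable f p /\
     (forall i : 'I_3, differentiable (partial f i) p)) ->
  guichard_net U f ->
  (forall p, U p -> differentiable (h I3) p) ->
  (forall p, U p ->
     partial (h I3) I1 p = - (lame f I2 p / lame f I3 p) * kappa f I1 I3 p /\
     partial (h I3) I2 p = (lame f I1 p / lame f I3 p) * kappa f I2 I3 p /\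
     partial (h I3) I3 p = - (lame f I1 p * lame f I2 p / (lame f I3 p) ^+ 2)
                              * (kappa f I3 I1 p - kappa f I3 I2 p) /\
     h I1 p = h I3 p + lame f I2 p / (lame f I1 p * lame f I3 p) /\
     h I2 p = h I3 p - lame f I1 p / (lame f I2 p * lame f I3 p)) ->
  (forall p, U p -> differentiable fs p /\
     forall i : 'I_3, partial fs i p = hstar f h c i p *: partial f i p) ->
  forall p, U p ->
    (lame_wrt f fs I1 p) ^+ 2 + (lame_wrt f fs I2 p) ^+ 2
      - (lame_wrt f fs I3 p) ^+ 2 = 0.
Proof.
move=> _ _ _ [TO G] _ Hh Hfs p Up.
have [det _] := TO p Up.
have n1 := @lame_nz _ f p I1 det.
have n2 := @lame_nz _ f p I2 det.
have n3 := @lame_nz _ f p I3 det.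
have [_ [_ [_ [eh1 eh2]]]] := Hh p Up.
have [_ Hp] := Hfs p Up.
have lw i : lame_wrt f fs i p = hstar f h c i p * lame f i p by rewrite /lame_wrt Hp dotZl.
rewrite !lw /hstar eh1 eh2 /eps /=.
exact (@alg _ (lame f I1 p) (lame f I2 p) (lame f I3 p) (h I3 p) c n1 n2 n3 (G p Up)).
Qed.
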